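(* Let $G$ be a countable abelian group with $\dim_{\mathbb Q}(G\otimes\mathbb Q)<\infty$, and let $H$ be the subgroup of $G$ generated by a maximal independent system of elements of infinite order of $G$ (so $H$ is free abelian of rank $\dim_{\mathbb Q}(G\otimes \mathbb Q)$). Then the exact sequence \[0\to H\overset{i}{\to} G\overset{\pi}{\to} G/H\to 0\] (with $i$ the inclusion and $\pi$ the quotient map) is coarsely split. Hence $G$ is coarsely equivalent to $H\oplus G/H$.
   Context: A proper norm on a group $G$ is a map $\|\cdot\|:G\to\mathbb R_{\ge 0}$ with $\|g\|=0$ iff $g$ is the identity, $\|g\|=\|g^{-1}\|$, $\|gh\|\le\|g\|+\|h\|$, and $\{g:\|g\|\le K\}$ finite for every $K>0$; it induces a proper left invariant metric $d(g,h)=\|g^{-1}h\|$. A map $f:(X,d_X)\to(Y,d_Y)$ is coarse if for every $\delta>0$ there is $\epsilon>0$ with $d_X(x,y)\le\delta\Rightarrow d_Y(f(x),f(y))\le\epsilon$; it is a coarse equivalence if there is a coarse $g:Y\to X$ and constants $K_1,K_2$ with $d_X(g(f(x)),x)\le K_1$, $d_Y(f(g(y)),y)\le K_2$ for all $x,y$. Countable groups are regarded as metric spaces via proper left invariant metrics (any two such metrics on the same countable group are coarsely equivalent via the identity). An exact sequence $1\to K\overset{i}{\to}G\overset{\pi}{\to}Q\to1$ is coarsely split if there are proper left invariant metrics $d_K,d_G,d_Q$ on $K,G,Q$ and a coarse equivalence $f:(G,d_G)\to(K\oplus Q,d_K\oplus d_Q)$ (where $d_K\oplus d_Q$ is the $\ell_1$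 sum metric) such that $f\circ i$ is at bounded distance from the inclusion $k\mapsto(k,1)$ and $\pi'\circ f$ is at bounded distance from $\pi$, where $\pi':K\oplus Q\to Q$ is the projection. A set of nonzero elements $\{x_j\}$ of an abelian group is independent if $\sum n_jx_j=0$ (finite sum, $n_j\in\mathbb Z$) implies $n_jx_j=0$ for all $j$. *)

(* Defs.v *)
From HB Require Import structures.
From mathcomp Require Import all_boot all_order all_algebra.
From mathcomp Require Import Rstruct.
Set Implicit Arguments. Unset Strict Implicit. Unset Printing Implicit Defensive.
Import Order.TTheory GRing.Theory Num.Theory.
Local Open Scope ring_scope.

Notation Real := Rdefinitions.R.

Definition proper_norm (K : zmodType) (nrm : K -> Real) : Prop :=
  [/\ forall x, 0 <= nrm x,
      forall x, nrm x = 0 <-> x = 0,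
      forall x, nrm (- x) = nrm x,
      forall x y, nrm (x + y) <= nrm x + nrm y &
      forall k : Real, 0 < k -> exists s : seq K, forall x, nrm x <= k -> x \in s].

Definition norm_dist (K : zmodType) (nrm : K -> Real) : K -> K -> Real :=
  fun g h => nrm (h - g).

Definition sum_dist (X Y : Type) (dX : X -> X -> Real) (dY : Y -> Y -> Real)
  : X * Y -> X * Y -> Real :=
  fun p q => dX p.1 q.1 + dY p.2 q.2.

Definition coarse_map (X Y : Type) (dX : X -> X -> Real) (dY : Y -> Y -> Real)
  (f : X -> Y) : Prop :=
  forall delta : Real, 0 < delta -> exists2 eps : Real, 0 < eps &
    forall x y, dX x y <= delta -> dY (f x) (f y) <= eps.

Definition coarse_equivalence (X Y : Type) (dX : X -> X -> Real)
  (dY : Y -> Y -> Real) (f : X -> Y) : Prop :=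
  coarse_map dX dY f /\
  exists g : Y -> X, [/\ coarse_map dY dX g,
    exists K1 : Real, forall x, dX (g (f x)) x <= K1 &
    exists K2 : Real, forall y, dY (f (g y)) y <= K2].

Definition coarsely_split (K G Q : zmodType) (i : K -> G) (pi : G -> Q) : Prop :=
  exists (nK : K -> Real) (nG : G -> Real) (nQ : Q -> Real),
    [/\ proper_norm nK, proper_norm nG, proper_norm nQ &
    exists f : G -> K * Q,
      [/\ coarse_equivalence (norm_dist nG) (sum_dist (norm_dist nK) (norm_dist nQ)) f,
          exists C : Real, forall k,
            sum_dist (norm_dist nK) (norm_dist nQ) (f (i k)) (k, 0) <= C &
          exists C : Real, forall g, norm_dist nQ (f g).2 (pi g) <= C]].

Definition coarsely_equivalent_groups (X Y : zmodType) : Prop :=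
  exists (nX : X -> Real) (nY : Y -> Real) (f : X -> Y),
    [/\ proper_norm nX, proper_norm nY &
        coarse_equivalence (norm_dist nX) (norm_dist nY) f].

Definition dsum (K Q : zmodType) : zmodType := (K * Q)%type.

Definition infinite_order (G : zmodType) (x : G) : Prop :=
  forall n : int, x *~ n = 0 -> n = 0.

Definition independent (G : zmodType) (S : G -> Prop) : Prop :=
  (forall x, S x -> x != 0) /\
  forall (s : seq G) (c : G -> int), uniq s -> (forall x, x \in s -> S x) ->
    \sum_(x <- s) x *~ c x = 0 -> forall x, x \in s -> x *~ c x = 0.

Definition indep_inf_system (G : zmodType) (S : G -> Prop) : Prop :=
  independent S /\ forall x, S x -> infinite_order x.

Definition maximal_indep_inf_system (G : zmodType) (S : G -> Prop) : Prop :=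
  indep_inf_system S /\
  forall S' : G -> Prop, (forall x, S x -> S' x) -> indep_inf_system S' ->
    forall x, S' x -> S x.

(* Finite torsion-free rank: independent systems of infinite-order elements
   have bounded size (this bound is dim_Q (G ⊗ Q)). *)
Definition finite_rank (G : zmodType) : Prop :=
  exists n : nat, forall s : seq G, uniq s ->
    indep_inf_system (fun x => x \in s) -> (size s <= n)%N.

Definition generated (G : zmodType) (S : G -> Prop) (x : G) : Prop :=
  exists (s : seq G) (c : G -> int), (forall y, y \in s -> S y) /\
    x = \sum_(y <- s) y *~ c y.

(* Main.v *)
Require Import Defs.
From HB Require Import structures.
From mathcomp Require Import all_boot all_order all_algebra.
From mathcomp Require Import Rstruct ring lra.
From Stdlib Require Import ClassicalEpsilon.
Import GRing.Theory Num.Theory Order.TTheory.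
Local Open Scope ring_scope.

Definition pb (P : Prop) : bool := if excluded_middle_informative P then true else false.
Lemma pbP (P : Prop) : reflect P (pb P).
Proof. rewrite /pb; case: excluded_middle_informative => h; by constructor. Qed.

Section Morph.
Variables (U V : zmodType) (f : U -> V).
Hypothesis fm : {morph f : x y / x + y}.
Lemma am0 : f 0 = 0.
Proof.
have h := fm 0 0; rewrite addr0 in h.
have : f 0 + f 0 - f 0 = f 0 - f 0 by rewrite -h.
by rewrite addrK subrr.
Qed.
Lemma amN x : f (- x) = - f x.
Proof.
have h := fm x (- x); rewrite subrr am0 in h.
by apply/eqP; rewrite -addr_eq0 addrC -h.
Qed.
Lemma amB x y : f (x - y) = f x - f y.
Proof. by rewrite fm amN. Qed.
Lemma amMn x n : f (x *+ n) = f x *+ n.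
Proof. elim: n => [|n IH]; first by rewrite !mulr0n am0. by rewrite !mulrS fm IH. Qed.
Lemma amMz x z : f (x *~ z) = f x *~ z.
Proof. case: z => n /=; first exact: amMn. by rewrite amN amMn. Qed.
Lemma amsum (T : Type) (s : seq T) (F : T -> U) :
  f (\sum_(y <- s) F y) = \sum_(y <- s) f (F y).
Proof. elim: s => [|y s IH]; first by rewrite !big_nil am0. by rewrite !big_cons fm IH. Qed.
End Morph.

Lemma coarse_lip (X Y : Type) (dX : X -> X -> Real) (dY : Y -> Y -> Real) (f : X -> Y) (C : Real) :
  0 <= C -> (forall x y, dY (f x) (f y) <= dX x y + C) -> coarse_map dX dY f.
Proof.
move=> C0 h delta d0; exists (delta + C); first by lra.
move=> x y hxy; have := h x y; lra.
Qed.

Section Tors.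
Variables (G : zmodType) (S : G -> Prop).
Hypothesis hmax : maximal_indep_inf_system S.

Lemma gen0 : generated S 0.
Proof. by exists [::], (fun _ => 0); split => //; rewrite big_nil. Qed.

Lemma tors (g : G) : exists m, (0 < m)%N /\ generated S (g *+ m).
Proof.
apply: Classical_Prop.NNPP => hn.
have hng : forall m, (0 < m)%N -> ~ generated S (g *+ m).
  by move=> m m0 hg; apply: hn; exists m.
have [[[hnz hind] hinf] hm] := hmax.
pose S' := fun x => S x \/ x = g.
have gnz : g != 0.
  apply/eqP => g0; apply: (hng 1%N) => //; rewrite g0 mul0rn; exact: gen0.
have ginf : infinite_order g.
  move=> n; case: n => k /= h.
  - case: k h => [|k] h //; exfalso; apply: (hng k.+1) => //; rewrite pmulrn h; exact: gen0.
  - exfalso; apply: (hng k.+1) => //.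
    by move/eqP: h; rewrite oppr_eq0 => /eqP ->; exact: gen0.
have indS' : indep_inf_system S'.
  split; last by move=> x [/hinf|->].
  split; first by move=> x [/hnz|->].
  move=> t c ut tS sum0 x xt.
  case: (boolP (g \in t)) => gt; last first.
    apply: (hind t c ut) => // y yt; case: (tS y yt) => // yg.
    by move: gt; rewrite -yg yt.
  have remS : forall y, y \in rem g t -> S y.
    move=> y; rewrite (mem_rem_uniq _ ut) inE => /andP [yg yt].
    by case: (tS y yt) => // /eqP; rewrite (negbTE yg).
  move: sum0; rewrite (big_rem g) //= => sum0.
  set R := \sum_(y <- rem g t) y *~ c y in sum0.
  have cg0 : c g = 0.
    case E : (c g) => [k|k].
    - case: k E => [|k] E //; exfalso; apply: (hng k.+1) => //.
      exists (rem g t), (fun y => - c y); split => //.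
      have -> : g *+ k.+1 = g *~ c g by rewrite E.
      apply/eqP; under eq_bigr do rewrite mulrNz.
      by rewrite sumrN -/R -addr_eq0; apply/eqP.
    - exfalso; apply: (hng k.+1) => //.
      exists (rem g t), c; split => //.
      have -> : g *+ k.+1 = - (g *~ c g) by rewrite E /= opprK.
      by apply/eqP; rewrite eqr_oppLR -addr_eq0 -/R; apply/eqP.
  move: sum0; rewrite cg0 mulr0z add0r => R0.
  case: (eqVneq x g) => [->|xg]; first by rewrite cg0 mulr0z.
  apply: (hind (rem g t) c (rem_uniq _ ut) remS R0).
  by rewrite (mem_rem_uniq _ ut) inE xg xt.
have Sg : S g := hm S' (fun x h => or_introl h) indS' g (or_intror erefl).
apply: (hng 1%N) => //; exists [:: g], (fun _ => 1); split.
  by move=> y; rewrite inE => /eqP ->.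
by rewrite big_seq1 mulr1z.
Qed.
End Tors.

Lemma sb_exists (G : zmodType) (S : G -> Prop) : finite_rank G -> indep_inf_system S ->
  exists sb : seq G, [/\ uniq sb, (forall x, x \in sb -> S x) & (forall x, S x -> x \in sb)].
Proof.
move=> [n hn] [[hnz hind] hinf].
have sub : forall s, uniq s -> (forall x, x \in s -> S x) -> (size s <= n)%N.
  move=> s us sS; apply: hn => //; split; last by move=> x /sS /hinf.
  split; first by move=> x /sS /hnz.
  by move=> t c ut tS; apply: hind => // x /tS /sS.
pose P k := pb (exists s : seq G, [/\ uniq s, (forall x, x \in s -> S x) & size s = k]).
have P0 : exists k, P k by exists 0%N; apply/pbP; exists [::].
have Pb : forall k, P k -> (k <= n)%N.
  by move=> k /pbP [s [us sS <-]]; apply: sub.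
case: (ex_maxnP P0 Pb) => k /pbP [s [us sS sk]] kmax.
exists s; split => // x Sx; apply/negPn/negP => xs.
have : P k.+1 by apply/pbP; exists (x :: s); split => //=; [rewrite xs | move=> y; rewrite inE => /orP [/eqP->|/sS] | rewrite sk].
by move/kmax; rewrite ltnn.
Qed.

Section Box.
Variable (G : zmodType).

Definition ints (N : nat) : seq int :=
  [seq (k%:Z) | k <- iota 0 N] ++ [seq - (k%:Z) | k <- iota 0 N].

Lemma ints_mem (z : int) (T : Real) N : `|(z%:~R : Real)| <= T -> T < N%:R -> z \in ints N.
Proof.
move=> h1 h2; rewrite mem_cat; apply/orP.
case: z h1 => k /= h1.
- left; apply/mapP; exists k => //; rewrite mem_iota add0n /=.
  have : (k%:R : Real) < N%:R by move: h1; rewrite normr_nat => h1; exact: le_lt_trans h1 h2.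
  by move=> h; rewrite -(ltr_nat Real).
- right; apply/mapP; exists k.+1 => //; rewrite mem_iota add0n /=.
  have : (k.+1%:R : Real) < N%:R.
    move: h1; rewrite -[Negz k]/(- (k.+1%:Z)) intrN normrN.
    rewrite -[(k.+1%:Z)%:~R]/(k.+1%:R : Real) normr_nat => h1; exact: le_lt_trans h1 h2.
  by move=> h; rewrite -(ltr_nat Real).
Qed.

Lemma box (l : seq G) (T : Real) : exists B : seq G, forall c : G -> int,
  (forall y, y \in l -> `|((c y)%:~R : Real)| <= T) -> \sum_(y <- l) y *~ c y \in B.
Proof.
have [N hN] : exists N : nat, T < N%:R.
  by exists (Num.Def.archi_bound T); exact: unstable.ltr_bound.
elim: l => [|y l [B hB]]; first by exists [:: 0] => c _; rewrite big_nil inE.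
exists [seq y *~ k + x | k <- ints N, x <- B] => c hc.
rewrite big_cons; apply: allpairs_f.
  by apply: (@ints_mem _ T) => //; apply: hc; rewrite inE eqxx.
by apply: hB => z zl; apply: hc; rewrite inE zl orbT.
Qed.

Lemma sum_le_size (s : seq G) (F : G -> Real) : (forall y, y \in s -> F y <= 1) ->
  \sum_(y <- s) F y <= (size s)%:R.
Proof.
elim: s => [|y s IH] h; first by rewrite big_nil.
rewrite big_cons /= -add1n natrD; apply: lerD; first by apply: h; rewrite inE eqxx.
by apply: IH => z zs; apply: h; rewrite inE zs orbT.
Qed.
End Box.

Section QNorm.
Variables (Q : zmodType) (e : nat -> Q).
Hypothesis esurj : forall q, exists k, e k = q.
Hypothesis qtors : forall q : Q, exists N, (0 < N)%N /\ q *+ N = 0.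

Definition ordq q := proj1_sig (constructive_indefinite_description _ (qtors q)).
Lemma ordqP q : (0 < ordq q)%N /\ q *+ ordq q = 0.
Proof. exact: (proj2_sig (constructive_indefinite_description _ (qtors q))). Qed.

Fixpoint F k : seq Q := match k with
  | 0 => [:: 0]
  | k.+1 => [seq e k *+ j + x | j <- iota 0 (ordq (e k)), x <- F k] end.

Lemma mulmod (a : Q) N j : a *+ N = 0 -> a *+ j = a *+ (j %% N).
Proof.
move=> h; rewrite {1}(divn_eq j N) mulrnDr [(_ * N)%N]mulnC mulrnA h mul0rn add0r //.
Qed.

Lemma F0 k : 0 \in F k.
Proof.
elim: k => [|k IH] /=; first by rewrite inE.
have -> : (0 : Q) = e k *+ 0 + 0 by rewrite mulr0n addr0.
apply: allpairs_f => //; rewrite mem_iota add0n; exact: (ordqP _).1.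
Qed.

Lemma Fstep k x : x \in F k -> x \in F k.+1.
Proof.
move=> xk /=; have -> : x = e k *+ 0 + x by rewrite mulr0n add0r.
apply: allpairs_f => //; rewrite mem_iota add0n; exact: (ordqP _).1.
Qed.

Lemma Fmono k l x : (k <= l)%N -> x \in F k -> x \in F l.
Proof.
elim: l => [|l IH]; first by rewrite leqn0 => /eqP ->.
rewrite leq_eqVlt => /orP [/eqP -> //|]; rewrite ltnS => kl xk.
by apply: Fstep; apply: IH.
Qed.

Lemma FD k x y : x \in F k -> y \in F k -> x + y \in F k.
Proof.
elim: k x y => [|k IH] x y /=; first by rewrite !inE => /eqP -> /eqP ->; rewrite addr0.
move=> /allpairsP [[j x'] /= [hj hx' ->]] /allpairsP [[j' y'] /= [hj' hy' ->]].
have [N0 hN] := ordqP (e k).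
have -> : e k *+ j + x' + (e k *+ j' + y') = e k *+ ((j + j') %% ordq (e k)) + (x' + y').
  rewrite -(@mulmod _ _ _ hN) mulrnDr.
  by rewrite addrACA.
apply: allpairs_f; last exact: IH.
by rewrite mem_iota add0n ltn_pmod.
Qed.

Lemma FN k x : x \in F k -> - x \in F k.
Proof.
elim: k x => [|k IH] x /=; first by rewrite !inE => /eqP ->; rewrite oppr0.
move=> /allpairsP [[j x'] /= [hj hx' ->]].
have [N0 hN] := ordqP (e k).
have -> : - (e k *+ j + x') = e k *+ ((j * (ordq (e k)).-1) %% ordq (e k)) + (- x').
  rewrite -(@mulmod _ _ _ hN) opprD; congr (_ + _).
  apply/eqP; rewrite eq_sym -addr_eq0 -mulrnDr.
  rewrite -{2}(muln1 j) -mulnDr addn1 prednK // mulnC mulrnA hN mul0rn //.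
apply: allpairs_f; last exact: IH.
by rewrite mem_iota add0n ltn_pmod.
Qed.

Lemma Fe k : e k \in F k.+1.
Proof.
have [N0 hN] := ordqP (e k).
have -> : e k = e k *+ (1 %% ordq (e k)) + 0 by rewrite -(@mulmod _ _ _ hN) addr0.
apply: allpairs_f; last exact: F0.
by rewrite mem_iota add0n ltn_pmod.
Qed.

Lemma F_all q : exists k, q \in F k.
Proof. have [k <-] := esurj q; exists k.+1; exact: Fe. Qed.

Definition lev q := ex_minn (F_all q).
Lemma lev_in q : q \in F (lev q).
Proof. by rewrite /lev; case: ex_minnP. Qed.
Lemma lev_min q k : q \in F k -> (lev q <= k)%N.
Proof. by rewrite /lev; case: ex_minnP => m _ h /h. Qed.

Lemma Flev x k : (lev x <= k)%N -> x \in F k.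
Proof. by move=> h; apply: (Fmono _ _ _ h (lev_in x)). Qed.

Definition nQ q : Real := (lev q)%:R.

Lemma nQ_proper : proper_norm nQ.
Proof.
split.
- by move=> x; rewrite /nQ ler0n.
- move=> x; split.
    rewrite /nQ => /eqP; rewrite pnatr_eq0 => /eqP h.
    by have := lev_in x; rewrite h inE => /eqP.
  move=> ->; rewrite /nQ; have := @lev_min 0 0 (F0 0); rewrite leqn0 => /eqP -> //.
- move=> x; rewrite /nQ; congr (_%:R); apply/eqP; rewrite eqn_leq.
  have h1 : (lev (- x) <= lev x)%N by apply: lev_min; apply: FN; apply: lev_in.
  have h2 : (lev x <= lev (- x))%N.
    by apply: lev_min; rewrite -{1}[x]opprK; apply: FN; apply: lev_in.
  by rewrite h1 h2.
- move=> x y; rewrite /nQ -natrD ler_nat.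
  apply: leq_trans (lev_min _ (maxn (lev x) (lev y)) _) _.
    by apply: FD; apply: Flev; rewrite ?leq_maxl ?leq_maxr.
  by rewrite geq_max leq_addr leq_addl.
- move=> k k0.
  exists (F (Num.Def.archi_bound k)) => x hx.
  apply: Flev.
  have := le_lt_trans hx (unstable.ltr_bound k).
  by rewrite /nQ ltr_nat => /ltnW.
Qed.
End QNorm.

Section Coords.
Variables (G : zmodType) (S : G -> Prop) (sb : seq G).
Hypothesis hS : indep_inf_system S.
Hypothesis sbu : uniq sb.
Hypothesis sbS : forall x, x \in sb -> S x.
Hypothesis Ssb : forall x, S x -> x \in sb.
Hypothesis htors : forall g : G, exists m, (0 < m)%N /\ generated S (g *+ m).

Definition NF (g : G) := exists c : G -> int, g = \sum_(y <- sb) y *~ c y.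

Lemma NF0 : NF 0.
Proof. by exists (fun _ => 0); rewrite big1 // => y _; rewrite mulr0z. Qed.

Lemma NFD a b : NF a -> NF b -> NF (a + b).
Proof.
move=> [ca ->] [cb ->]; exists (fun y => ca y + cb y).
by rewrite -big_split /=; apply: eq_bigr => y _; rewrite mulrzDr.
Qed.

Lemma NF1 y k : y \in sb -> NF (y *~ k).
Proof.
move=> ysb; exists (fun z => if z == y then k else 0).
rewrite (big_rem y) //= eqxx big1_seq ?addr0 // => z /= zr.
move: zr; rewrite (mem_rem_uniq _ sbu) inE => /andP [zy _].
by rewrite (negbTE zy) mulr0z.
Qed.

Lemma gen_NF g : generated S g -> NF g.
Proof.
move=> [s [c [sS ->]]]; elim: s sS => [|y s IH] sS; first by rewrite big_nil; exact: NF0.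
rewrite big_cons; apply: NFD; first by apply: NF1; apply: Ssb; apply: sS; rewrite inE eqxx.
by apply: IH => z zs; apply: sS; rewrite inE zs orbT.
Qed.

Lemma NF_gen g : NF g -> generated S g.
Proof. by move=> [c ->]; exists sb, c; split. Qed.

Lemma UNQ (a b : G -> int) : \sum_(y <- sb) y *~ a y = \sum_(y <- sb) y *~ b y ->
  forall y, y \in sb -> a y = b y.
Proof.
move=> h y ysb.
have [[_ hind] hinf] := hS.
have h0 : \sum_(y <- sb) y *~ (a y - b y) = 0.
  by under eq_bigr do rewrite mulrzBr; rewrite sumrB h subrr.
have := hind sb (fun y => a y - b y) sbu sbS h0 y ysb.
move/(hinf y (sbS y ysb)) => /eqP; rewrite subr_eq0 => /eqP //.
Qed.

Lemma tors' g : exists p : nat * (G -> int), (0 < p.1)%N /\ g *+ p.1 = \sum_(y <- sb) y *~ p.2 y.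
Proof.
have [m [m0 /gen_NF [c hc]]] := htors g.
by exists (m, c).
Qed.

Definition rep g := proj1_sig (constructive_indefinite_description _ (tors' g)).
Lemma repP g : (0 < (rep g).1)%N /\ g *+ (rep g).1 = \sum_(y <- sb) y *~ (rep g).2 y.
Proof. exact: (proj2_sig (constructive_indefinite_description _ (tors' g))). Qed.

Definition phi (g : G) (y : G) : Real := ((rep g).2 y)%:~R / ((rep g).1)%:R.

Lemma sumMn (c : G -> int) M : (\sum_(y <- sb) y *~ c y) *+ M = \sum_(y <- sb) y *~ (c y * M%:Z).
Proof. by rewrite -sumrMnl; apply: eq_bigr => y _; rewrite mulrzA -pmulrn. Qed.

Lemma phi_key g M (b : G -> int) y : (0 < M)%N -> g *+ M = \sum_(y <- sb) y *~ b y ->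
  y \in sb -> phi g y = (b y)%:~R / M%:R.
Proof.
move=> M0 hM ysb; rewrite /phi; have [m0 hm] := repP g.
move: m0 hm; set m := (rep g).1; set a := (rep g).2 => m0 hm.
have e : \sum_(y <- sb) y *~ (a y * M%:Z) = \sum_(y <- sb) y *~ (b y * m%:Z).
  by rewrite -!sumMn -hm -hM -!mulrnA mulnC.
have e' := @UNQ _ _ e _ ysb.
apply/eqP; rewrite eqr_div ?pnatr_eq0 -?lt0n //.
by rewrite -[M%:R]/((M%:Z)%:~R) -[m%:R]/((m%:Z)%:~R) -!intrM e'.
Qed.



Lemma phi_NF (c : G -> int) y : y \in sb -> phi (\sum_(z <- sb) z *~ c z) y = (c y)%:~R.
Proof. by move=> ysb; rewrite (@phi_key _ 1%N c) // ?mulr1n // divr1. Qed.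

Lemma phi0 y : y \in sb -> phi 0 y = 0.
Proof.
move=> ysb; rewrite (@phi_key _ 1%N (fun _ => 0)) //= ?mul0r //.
by rewrite mulr1n big1 // => z _; rewrite mulr0z.
Qed.

Lemma phiD g g' y : y \in sb -> phi (g + g') y = phi g y + phi g' y.
Proof.
move=> ysb; have [m0 hm] := repP g; have [m0' hm'] := repP g'.
rewrite (@phi_key _ ((rep g).1 * (rep g').1)%N
   (fun y => (rep g).2 y * ((rep g').1)%:Z + (rep g').2 y * ((rep g).1)%:Z)) //; last first.
- rewrite mulrnDl mulrnA hm [(_ * _)%N]mulnC mulrnA hm' !sumMn -big_split /=.
  by apply: eq_bigr => z _; rewrite mulrzDr.
- by rewrite muln_gt0 m0.
rewrite /phi.
move: m0 hm m0' hm'; set m := (rep g).1; set a := (rep g).2;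
  set m' := (rep g').1; set a' := (rep g').2 => m0 hm m0' hm'.
rewrite intrD !intrM natrM -[m%:R]/((m%:Z)%:~R) -[m'%:R]/((m'%:Z)%:~R).
have h1 : ((m%:Z)%:~R : Real) != 0 by rewrite intr_eq0 -lt0n.
have h2 : ((m'%:Z)%:~R : Real) != 0 by rewrite intr_eq0 -lt0n.
move: h1 h2; move: ((a y)%:~R : Real) ((a' y)%:~R : Real) ((m%:Z)%:~R : Real) ((m'%:Z)%:~R : Real) => A A' x x' h1 h2.
by field; rewrite h1 h2.
Qed.

Lemma phiN g y : y \in sb -> phi (- g) y = - phi g y.
Proof.
move=> ysb; apply/eqP; rewrite -addr_eq0 -phiD //.
by rewrite addNr phi0.
Qed.

Lemma phiB g g' y : y \in sb -> phi (g - g') y = phi g y - phi g' y.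
Proof. by move=> ysb; rewrite phiD // phiN. Qed.

Definition nu (g : G) : Real := \sum_(y <- sb) `|phi g y|.

Lemma nu_ge0 g : 0 <= nu g.
Proof. by apply: sumr_ge0 => y _. Qed.

Lemma nuD g g' : nu (g + g') <= nu g + nu g'.
Proof.
rewrite /nu -big_split /= big_seq [X in _ <= X]big_seq; apply: ler_sum => y ysb.
by rewrite phiD // ler_normD.
Qed.

Lemma nuN g : nu (- g) = nu g.
Proof. by rewrite /nu big_seq [RHS]big_seq; apply: eq_bigr => y ysb; rewrite phiN // normrN. Qed.

Lemma phi_le_nu g y : y \in sb -> `|phi g y| <= nu g.
Proof.
move=> ysb; rewrite /nu (big_rem y) //= lerDl.
by apply: sumr_ge0.
Qed.

Lemma NF_phi0 h : NF h -> (forall y, y \in sb -> phi h y = 0) -> h = 0.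
Proof.
move=> [c ->] h0; rewrite big1_seq // => y /= ysb.
have := h0 y ysb; rewrite phi_NF // => /eqP; rewrite intr_eq0 => /eqP ->.
by rewrite mulr0z.
Qed.

Definition flo (g : G) : G := \sum_(y <- sb) y *~ Num.floor (phi g y).

Lemma NF_flo g : NF (flo g).
Proof. by exists (fun y => Num.floor (phi g y)). Qed.

Lemma nu_frac g : nu (g - flo g) <= (size sb)%:R.
Proof.
apply: sum_le_size => y ysb.
rewrite phiB // phi_NF //.
have /andP [h1 h2] := floor_itv (phi g y).
rewrite ger0_norm ?subr_ge0 //.
by move: h2; rewrite intrD; lra.
Qed.

Lemma NF_box (T : Real) : exists B : seq G, forall h, NF h -> nu h <= T -> h \in B.
Proof.
have [B hB] := @box G sb T.
exists B => h [c hc] hT; rewrite hc; apply: hB => y ysb.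
rewrite -(@phi_NF c y ysb) -hc; exact: le_trans (@phi_le_nu h y ysb) hT.
Qed.

Lemma nu_NF0 h : NF h -> nu h = 0 -> h = 0.
Proof.
move=> hh n0; apply: NF_phi0 => // y ysb.
apply/eqP; rewrite -normr_eq0 eq_le normr_ge0 andbT -n0; exact: phi_le_nu.
Qed.

Lemma nu0 : nu 0 = 0.
Proof. by rewrite /nu big1_seq // => y /= ysb; rewrite phi0 // normr0. Qed.

Section Main.
Variables (K Q : zmodType) (i : K -> G) (pi : G -> Q).
Hypothesis im : {morph i : x y / x + y}.
Hypothesis iinj : injective i.
Hypothesis hgen : forall g, generated S g <-> exists k, g = i k.
Hypothesis pim : {morph pi : x y / x + y}.
Hypothesis pisurj : forall q, exists g, pi g = q.
Hypothesis piker : forall g, pi g = 0 <-> exists k, g = i k.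
Variable nQ : Q -> Real.
Hypothesis nQp : proper_norm nQ.

Lemma NF_H g : NF g <-> exists k, g = i k.
Proof. split; first by move/NF_gen/hgen. by move/hgen/gen_NF. Qed.

Definition iinv (g : G) : K :=
  match excluded_middle_informative (exists k, g = i k) with
  | left h => proj1_sig (constructive_indefinite_description _ h)
  | right _ => 0 end.

Lemma iinvK g : (exists k, g = i k) -> i (iinv g) = g.
Proof.
rewrite /iinv => h; case: excluded_middle_informative => // h'.
by rewrite -(proj2_sig (constructive_indefinite_description _ h')).
Qed.

Lemma iinv_i k : iinv (i k) = k.
Proof. by apply: iinj; rewrite iinvK //; exists k. Qed.

Definition pre (q : Q) : G := proj1_sig (constructive_indefinite_description _ (pisurj q)).
Lemma preP q : pi (pre q) = q.
Proof. exact: (proj2_sig (constructive_indefinite_description _ (pisurj q))). Qed.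

Definition sec (q : Q) : G := pre q - flo (pre q).

Lemma pi_NF h : NF h -> pi h = 0.
Proof. by move/NF_H/piker. Qed.

Lemma sec_pi q : pi (sec q) = q.
Proof. by rewrite /sec (amB _ _ _ pim) (pi_NF _ (NF_flo (pre q))) subr0 preP. Qed.

Definition nn : Real := (size sb)%:R.

Lemma sec_nu q : nu (sec q) <= nn.
Proof. exact: nu_frac. Qed.

Lemma nn_ge0 : 0 <= nn.
Proof. exact: ler0n. Qed.

Lemma pi_i k : pi (i k) = 0.
Proof. by apply/piker; exists k. Qed.

Definition nK (k : K) : Real := nu (i k).
Definition nG (g : G) : Real := nu g + nQ (pi g).

Lemma nQ0 : nQ 0 = 0.
Proof. by case: nQp => _ h _ _ _; apply/h. Qed.

Lemma nK_proper : proper_norm nK.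
Proof.
rewrite /nK; split.
- by move=> x; apply: nu_ge0.
- move=> x; split; last by move=> ->; rewrite (am0 _ _ _ im) nu0.
  move=> h; apply: iinj; rewrite (am0 _ _ _ im); apply: nu_NF0 => //.
  by apply/NF_H; exists x.
- by move=> x; rewrite (amN _ _ _ im) nuN.
- by move=> x y; rewrite im nuD.
- move=> k k0; have [B hB] := NF_box k.
  exists (map iinv B) => x hx; rewrite -(iinv_i x); apply: map_f; apply: hB => //.
  by apply/NF_H; exists x.
Qed.

Lemma nG_proper : proper_norm nG.
Proof.
case: nQp => q0 q1 q2 q3 q4.
rewrite /nG; split.
- by move=> x; rewrite addr_ge0 // nu_ge0.
- move=> x; split; last by move=> ->; rewrite (am0 _ _ _ pim) nu0 nQ0 addr0.
  move=> h.
  have h1 := nu_ge0 x; have h2 := q0 (pi x).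
  have e1 : nu x = 0 by lra.
  have e2 : nQ (pi x) = 0 by lra.
  apply: nu_NF0 => //; apply/NF_H; apply/piker; exact/q1.
- by move=> x; rewrite (amN _ _ _ pim) nuN q2.
- move=> x y; rewrite pim; have := nuD x y; have := q3 (pi x) (pi y); lra.
- move=> k k0; have [LQ hLQ] := q4 k k0.
  have [B hB] := NF_box (k + nn).
  exists [seq sec q + h | q <- LQ, h <- B] => x hx.
  have -> : x = sec (pi x) + (x - sec (pi x)) by rewrite addrC subrK.
  apply: allpairs_f.
    apply: hLQ; have := nu_ge0 x; lra.
  apply: hB.
    apply/NF_H/piker; by rewrite (amB _ _ _ pim) sec_pi subrr.
  apply: le_trans (nuD _ _) _; rewrite nuN.
  have := sec_nu (pi x); have := q0 (pi x); lra.
Qed.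

Definition fm (g : G) : K * Q := (iinv (g - sec (pi g)), pi g).
Definition gm (p : K * Q) : G := i p.1 + sec p.2.

Lemma fmK g : gm (fm g) = g.
Proof.
rewrite /gm /fm /= iinvK ?subrK //.
by apply/piker; rewrite (amB _ _ _ pim) sec_pi subrr.
Qed.

Lemma gmK p : fm (gm p) = p.
Proof.
case: p => k q; rewrite /fm /gm /= pim pi_i add0r sec_pi addrK iinv_i //.
Qed.

Definition dG := norm_dist nG.
Definition dKQ := sum_dist (norm_dist nK) (norm_dist nQ).

Lemma i_iinv_fm g : i (fm g).1 = g - sec (pi g).
Proof. by rewrite /fm /= iinvK //; apply/piker; rewrite (amB _ _ _ pim) sec_pi subrr. Qed.

Lemma fm_lip g g' : dKQ (fm g) (fm g') <= dG g g' + (nn + nn).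
Proof.
rewrite /dKQ /dG /sum_dist /norm_dist /nK /nG (amB _ _ _ im) !i_iinv_fm /fm /= (amB _ _ _ pim).
have -> : g' - sec (pi g') - (g - sec (pi g)) = (g' - g) + (- sec (pi g') + sec (pi g)).
  by rewrite opprB [_ - g]addrC addrACA.
have h1 := nuD (g' - g) (- sec (pi g') + sec (pi g)).
have h2 := nuD (- sec (pi g')) (sec (pi g)).
rewrite nuN in h2.
have := sec_nu (pi g'); have := sec_nu (pi g); lra.
Qed.

Lemma gm_lip p p' : dG (gm p) (gm p') <= dKQ p p' + (nn + nn).
Proof.
case: p => k q; case: p' => k' q'.
rewrite /dKQ /dG /sum_dist /norm_dist /nK /nG /gm /= (amB _ _ _ pim) (pim (i k')) (pim (i k)) !pi_i !add0r !sec_pi.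
have -> : i k' + sec q' - (i k + sec q) = i (k' - k) + (sec q' - sec q).
  by rewrite (amB _ _ _ im) opprD addrACA.
have h1 := nuD (i (k' - k)) (sec q' - sec q).
have h2 := nuD (sec q') (- sec q).
rewrite nuN in h2.
have := sec_nu q'; have := sec_nu q; lra.
Qed.



Lemma nK0 : nK 0 = 0.
Proof. by case: nK_proper => _ h _ _ _; apply/h. Qed.
Lemma nG0 : nG 0 = 0.
Proof. by case: nG_proper => _ h _ _ _; apply/h. Qed.

Lemma split_main : coarsely_split i pi.
Proof.
exists nK, nG, nQ; split; [exact: nK_proper | exact: nG_proper | exact: nQp |].
have nn0 : 0 <= nn + nn by have := nn_ge0; lra.
exists fm; split.
- split; first exact: (@coarse_lip _ _ _ _ _ _ nn0 fm_lip).
  exists gm; split; first exact: (@coarse_lip _ _ _ _ _ _ nn0 gm_lip).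
    by exists 0 => x; rewrite fmK /norm_dist subrr nG0.
  by exists 0 => y; rewrite gmK /sum_dist /norm_dist !subrr nK0 nQ0 addr0.
- exists nn => k; rewrite /sum_dist /norm_dist /= /nK (amB _ _ _ im) i_iinv_fm.
  rewrite pi_i subrr nQ0 addr0 opprB addrC subrK; exact: sec_nu.
- by exists 0 => g; rewrite /norm_dist /fm /= subrr nQ0.
Qed.

Definition nY (p : dsum K Q) : Real := nK p.1 + nQ p.2.

Lemma nY_proper : proper_norm nY.
Proof.
case: nK_proper => k0 k1 k2 k3 k4; case: nQp => q0 q1 q2 q3 q4.
rewrite /nY; split.
- by move=> p; rewrite addr_ge0.
- move=> [a b] /=; split.
    move=> h; have := k0 a; have := q0 b => h1 h2.
    have e1 : nK a = 0 by lra.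
    have e2 : nQ b = 0 by lra.
    by move/k1: e1 => ->; move/q1: e2 => ->.
  by case=> -> ->; rewrite nK0 nQ0 addr0.
- by move=> [a b] /=; rewrite k2 q2.
- move=> [a b] [c d] /=; have := k3 a c; have := q3 b d; lra.
- move=> k kp; have [LK hK] := k4 k kp; have [LQ hQ] := q4 k kp.
  exists [seq (a, b) | a <- LK, b <- LQ] => [[a b]] /= h.
  apply: allpairs_f; [apply: hK | apply: hQ]; have := k0 a; have := q0 b; lra.
Qed.

Lemma equiv_main : coarsely_equivalent_groups G (dsum K Q).
Proof.
exists nG, nY, fm; split; [exact: nG_proper | exact: nY_proper |].
have nn0 : 0 <= nn + nn by have := nn_ge0; lra.
split; first exact: (@coarse_lip _ _ _ _ _ _ nn0 fm_lip).
exists gm; split; first exact: (@coarse_lip _ _ _ _ _ _ nn0 gm_lip).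
  by exists 0 => x; rewrite fmK /norm_dist subrr nG0.
by exists 0 => y; rewrite gmK /norm_dist subrr /nY /= nK0 nQ0 addr0.
Qed.
End Main. End Coords.

Theorem mainTheorem1 (G : countZmodType) (S : G -> Prop)
  (K Q : zmodType) (i : K -> G) (pi : G -> Q) :
  finite_rank G ->
  maximal_indep_inf_system S ->
  {morph i : x y / x + y} -> injective i ->
  (forall g, generated S g <-> exists k, g = i k) ->
  {morph pi : x y / x + y} -> (forall q, exists g, pi g = q) ->
  (forall g, pi g = 0 <-> exists k, g = i k) ->
  coarsely_split i pi /\ coarsely_equivalent_groups G (dsum K Q).
Proof.
move=> hrank hmax im iinj hgen pim pisurj piker.
have hS := hmax.1.
have [sb [sbu sbS Ssb]] := @sb_exists _ _ hrank hS.
have htors := @tors _ _ hmax.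
pose e k : Q := match unpickle k with Some g => pi g | None => 0 end.
have esurj : forall q, exists k, e k = q.
  move=> q; have [g <-] := pisurj q; exists (pickle g); by rewrite /e pickleK.
have qtors : forall q : Q, exists N, (0 < N)%N /\ q *+ N = 0.
  move=> q; have [g <-] := pisurj q; have [m [m0 hm]] := htors g.
  exists m; split => //; rewrite -(amMn _ _ _ pim); apply/piker; exact/hgen.
have nQp := @nQ_proper _ _ esurj qtors.
split.
- exact: (@split_main _ _ _ hS sbu sbS Ssb htors _ _ _ _ im iinj hgen pim pisurj piker _ nQp).
- exact: (@equiv_main _ _ _ hS sbu sbS Ssb htors _ _ _ _ im iinj hgen pim pisurj piker _ nQp).
Qed.
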